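(* Let $G$ be a group. (i) If $\leq$ is a quasi-total order on $G$, then $\leq$ is admissible and for every dominant $g\in G^{++}$ the growth function $\gamma_g$ is a nonzero homogeneous quasimorphism. (ii) Conversely, for every nonzero homogeneous quasimorphism $f:G\to\mathbb{R}$ there exist a quasi-total order $\leq$ on $G$ and a dominant $g\in G^{++}$ of $(G,\leq)$ such that $f$ is a positive multiple of the growth function $\gamma_g$ of $\leq$.
   Context: A partial order $\leq$ on a group $G$ is bi-invariant if $g\leq h$ implies $gk\leq hk$ and $kg\leq kh$ for all $g,h,k\in G$. Its order semigroup is $G^+=\{g\in G: g\geq e\}$, and its set of dominants is $G^{++}=\{g\in G^+\setminus\{e\}: \forall h\in G\ \exists n\in\mathbb{N}_0,\ g^n\geq h\}$; the order is admissible if $G^{++}\neq\emptyset$. For $g\in G^{++}$ the growth function is $\gamma_g(h)=\lim_{n\to\infty}\frac{1}{n}\inf\{p\in\mathbb{Z}: g^p\geq h^n\}$. A map $f:G\to\mathbb{R}$ is a quasimorphism if $\sup_{h,k}|f(hk)-f(h)-f(k)|<\infty$, and homogeneous if $f(h^n)=nf(h)$ for all $n\in\mathbb{N}$. A half-space filtration of a set $X$ is a family $\{H_n\}_{n\in\mathbb{Z}}$ of subsets with $H_{n+1}\subsetneq H_n$ for all $n$, $\bigcap_n H_n=\emptyset$ and $\bigcup_n H_n=X$. The height of $a\in X$ is $h(a)=\sup\{n\in\mathbb{Z}: a\in H_n\}$, and $h(a,b)=h(a)-h(b)$. A triple $(X,\preceq,\{H_n\})$ is a half-space order if $(X,\preceq)$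 is a poset, $\{H_n\}$ is a half-space filtration of $X$, and there is a constant $w$ with $h(a,b)\geq w\Rightarrow a\succeq b$ for all $a,b\in X$. An action of a group $G$ on $X$ (by bijections, not necessarily order-preserving) is by quasi-automorphisms if there is $d$ with $|h(ga,gb)-h(a,b)|\leq d$ for all $g\in G$, $a,b\in X$; it is unbounded if there exist $g\in G$, $a\in X$ with $h(g^n a)\to\pm\infty$ as $n\to\pm\infty$. Given an effective $G$-action on a poset $(X,\preceq)$, the induced order on $G$ is $g\leq h :\Leftrightarrow \forall k\in G\ \forall x\in X:\ (kg).x\preceq (kh).x$; it is bi-invariant. A quasi-total order on $G$ is an order induced in this way from an effective, unbounded action by quasi-automorphisms of $G$ on some half-space order. *)

(* Defs.v *)
From HB Require Import structures.
From mathcomp Require Import ssreflect ssrfun ssrbool eqtype choice ssrnat seq.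
From mathcomp Require Import monoid.
From Stdlib Require Import ZArith Reals.

Set Implicit Arguments.
Unset Strict Implicit.
Unset Printing Implicit Defensive.

Local Open Scope group_scope.

Definition zpowg (G : groupType) (g : G) (p : Z) : G :=
  match p with
  | Z0 => 1
  | Zpos q => g ^+ Pos.to_nat q
  | Zneg q => (g ^+ Pos.to_nat q)^-1
  end.

Definition bi_invariant_order (G : groupType) (le : G -> G -> Prop) : Prop :=
  (forall g, le g g) /\
  (forall g h, le g h -> le h g -> g = h) /\
  (forall g h k, le g h -> le h k -> le g k) /\
  (forall g h k, le g h -> le (g * k) (h * k) /\ le (k * g) (k * h)).

Definition dominant (G : groupType) (le : G -> G -> Prop) (g : G) : Prop :=
  le 1 g /\ g <> 1 /\ forall h : G, exists n : nat, le h (g ^+ n).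

Definition admissible (G : groupType) (le : G -> G -> Prop) : Prop :=
  exists g : G, dominant le g.

(** [p] is the infimum (attained, i.e. minimum) of { p in Z : g^p >= h^n }. *)
Definition is_min_exponent (G : groupType) (le : G -> G -> Prop)
    (g h : G) (n : nat) (p : Z) : Prop :=
  le (h ^+ n) (zpowg g p) /\
  forall q : Z, le (h ^+ n) (zpowg g q) -> (p <= q)%Z.

(** [growth le g h r] : gamma_g(h) exists and equals r, i.e. the infima
    a_n = inf { p in Z : g^p >= h^n } are finite and a_n / n --> r. *)
Definition growth (G : groupType) (le : G -> G -> Prop) (g h : G) (r : R) : Prop :=
  exists a : nat -> Z,
    (forall n, is_min_exponent le g h n (a n)) /\
    Un_cv (fun n => (IZR (a n) / INR n)%R) r.

Definition quasimorphism (G : groupType) (f : G -> R) : Prop :=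
  exists D : R, forall h k : G, (Rabs (f (h * k)%g - f h - f k) <= D)%R.

Definition homogeneous (G : groupType) (f : G -> R) : Prop :=
  forall (h : G) (n : nat), f (h ^+ n) = (INR n * f h)%R.

Definition nonzero_fun (G : Type) (f : G -> R) : Prop :=
  exists h : G, f h <> 0%R.

Definition poset (X : Type) (le : X -> X -> Prop) : Prop :=
  (forall a, le a a) /\
  (forall a b, le a b -> le b a -> a = b) /\
  (forall a b c, le a b -> le b c -> le a c).

Definition half_space_filtration (X : Type) (H : Z -> X -> Prop) : Prop :=
  (forall n, (forall a, H (n + 1)%Z a -> H n a) /\ exists a, H n a /\ ~ H (n + 1)%Z a) /\
  (forall a, ~ (forall n, H n a)) /\
  (forall a, exists n, H n a).

(** [height H a n] : h(a) = sup { n : a in H_n } = n (the sup is attained). *)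
Definition height (X : Type) (H : Z -> X -> Prop) (a : X) (n : Z) : Prop :=
  H n a /\ forall m, H m a -> (m <= n)%Z.

Definition half_space_order (X : Type) (le : X -> X -> Prop)
    (H : Z -> X -> Prop) : Prop :=
  poset le /\ half_space_filtration H /\
  exists w : R, forall (a b : X) (ha hb : Z),
    height H a ha -> height H b hb -> (IZR (ha - hb) >= w)%R -> le b a.

(** Group actions (by bijections; bijectivity follows from the action laws). *)
Definition group_action (G : groupType) (X : Type) (act : G -> X -> X) : Prop :=
  (forall x, act 1 x = x) /\ (forall g h x, act (g * h) x = act g (act h x)).

Definition effective_action (G : groupType) (X : Type) (act : G -> X -> X) : Prop :=
  forall g : G, (forall x, act g x = x) -> g = 1.

Definition quasi_automorphism_action (G : groupType) (X : Type)
    (H : Z -> X -> Prop) (act : G -> X -> X) : Prop :=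
  exists d : R, forall (g : G) (a b : X) (hga hgb ha hb : Z),
    height H (act g a) hga -> height H (act g b) hgb ->
    height H a ha -> height H b hb ->
    (Rabs (IZR ((hga - hgb) - (ha - hb))) <= d)%R.

Definition unbounded_action (G : groupType) (X : Type)
    (H : Z -> X -> Prop) (act : G -> X -> X) : Prop :=
  exists (g : G) (a : X),
    (forall M : Z, exists N : Z, forall (n hn : Z),
        (n >= N)%Z -> height H (act (zpowg g n) a) hn -> (hn >= M)%Z) /\
    (forall M : Z, exists N : Z, forall (n hn : Z),
        (n <= N)%Z -> height H (act (zpowg g n) a) hn -> (hn <= M)%Z).

Definition induced_order (G : groupType) (X : Type) (leX : X -> X -> Prop)
    (act : G -> X -> X) (g h : G) : Prop :=
  forall (k : G) (x : X), leX (act (k * g) x) (act (k * h) x).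

Definition quasi_total_order (G : groupType) (le : G -> G -> Prop) : Prop :=
  exists (X : Type) (leX : X -> X -> Prop) (H : Z -> X -> Prop) (act : G -> X -> X),
    half_space_order leX H /\ group_action act /\ effective_action act /\
    quasi_automorphism_action H act /\ unbounded_action H act /\
    forall g h : G, le g h <-> induced_order leX act g h.

(* Main.v *)
Require Import Defs.
From mathcomp Require Import ssreflect ssrfun ssrbool monoid.
From Stdlib Require Import ZArith Reals Lia Lra Classical IndefiniteDescription FunctionalExtensionality PropExtensionality.

Section Zpow.
Variable G : groupType.
Local Open Scope group_scope.

Lemma zpow_nat (g : G) n : zpowg g (Z.of_nat n) = g ^+ n.
Proof. case: n => [|n] //=. by rewrite SuccNat2Pos.id_succ. Qed.

Lemma zpow_negnat (g : G) n : zpowg g (- Z.of_nat n) = (g ^+ n)^-1.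
Proof. case: n => [|n] /=; first by rewrite invg1. by rewrite SuccNat2Pos.id_succ. Qed.

Lemma Z_nat_or_neg (p : Z) : exists n, p = Z.of_nat n \/ p = (- Z.of_nat n)%Z.
Proof.
  destruct (Z_le_gt_dec 0 p).
  - exists (Z.to_nat p); left; lia.
  - exists (Z.to_nat (-p)); right; lia.
Qed.

Lemma zpow_succ (g : G) p : zpowg g (p + 1) = zpowg g p * g.
Proof.
  have [n [->|->]] := Z_nat_or_neg p.
  - have -> : (Z.of_nat n + 1 = Z.of_nat (S n))%Z by lia.
    by rewrite !zpow_nat expgSr.
  - case: n => [|n].
    + by rewrite /= mul1g.
    + have -> : (- Z.of_nat (S n) + 1 = - Z.of_nat n)%Z by lia.
      by rewrite !zpow_negnat expgS invgM -mulgA mulVg mulg1.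
Qed.

Lemma zpow_pred (g : G) p : zpowg g (p - 1) = zpowg g p * g^-1.
Proof.
  have := zpow_succ g (p - 1). have -> : (p - 1 + 1 = p)%Z by lia.
  by move=> ->; rewrite mulgK.
Qed.

Lemma zpow_add (g : G) p q : zpowg g (p + q) = zpowg g p * zpowg g q.
Proof.
  move: q; apply: Z.peano_ind.
  - by rewrite Z.add_0_r mulg1.
  - move=> q IH. rewrite -!Z.add_1_r Z.add_assoc !zpow_succ IH mulgA //.
  - move=> q IH. rewrite -!Z.sub_1_r Z.add_sub_assoc !zpow_pred IH mulgA //.
Qed.

Lemma zpow_opp (g : G) p : zpowg g (- p) = (zpowg g p)^-1.
Proof.
  have := zpow_add g (-p) p. rewrite Z.add_opp_diag_l /= => h. by rewrite -(mulgK (zpowg g p) (zpowg g (-p))) -h mul1g.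
Qed.
End Zpow.

Section Reals1.
Local Open Scope R_scope.

Lemma zmin (P : Z -> Prop) (p0 L : Z) : P p0 -> (forall p, P p -> (L <= p)%Z) ->
  exists m, P m /\ forall q, P q -> (m <= q)%Z.
Proof.
  move=> Hp0 HL.
  suff H : forall k : nat, forall p, P p -> (Z.to_nat (p - L) <= k)%nat ->
    exists m, P m /\ forall q, P q -> (m <= q)%Z by apply: (H (Z.to_nat (p0 - L)) p0 Hp0); lia.
  elim=> [|k IH] p Hp Hk.
  - exists p; split => // q Hq. have := HL q Hq. have := HL p Hp. lia.
  - destruct (classic (exists q, P q /\ (q < p)%Z)) as [[q [Hq Hqp]]|Hn].
    + apply: (IH q Hq). have := HL q Hq. lia.
    + exists p; split => // q Hq. destruct (Z_lt_le_dec q p) as [h|h] => //.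
      exfalso; apply: Hn; by exists q.
Qed.

Lemma zmax (P : Z -> Prop) (p0 U : Z) : P p0 -> (forall p, P p -> (p <= U)%Z) ->
  exists m, P m /\ forall q, P q -> (q <= m)%Z.
Proof.
  move=> Hp0 HU.
  have [m [Hm1 Hm2]] := zmin (fun q => P (- q)%Z) (- p0) (- U)
     ltac:(cbv beta; rewrite Z.opp_involutive; exact Hp0) ltac:(move=> p /HU; lia).
  exists (- m)%Z; split => // q Hq. have H := Hm2 (- q)%Z. simpl in H.
  rewrite Z.opp_involutive in H. have := H Hq. lia.
Qed.

Lemma nat_big (r : R) : exists n : nat, r <= INR n.
Proof. have [n Hn] := INR_unbounded r. exists n; lra. Qed.

Lemma nat_big1 (r : R) : exists n : nat, (1 <= n)%nat /\ r <= INR n.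
Proof.
  have [n Hn] := INR_unbounded r. exists (S n); split; first lia.
  rewrite S_INR; lra.
Qed.

Lemma zero_of_bounded (t M : R) : (forall n : nat, INR n * Rabs t <= M) -> t = 0.
Proof.
  move=> H. destruct (Req_dec t 0) as [|Ht] => //. exfalso.
  have Ha : 0 < Rabs t by apply: Rabs_pos_lt.
  have [n Hn] := nat_big ((M + 1) / Rabs t).
  have := H n. have : (M + 1) / Rabs t * Rabs t = M + 1 by field; lra.
  move=> E. have := Rmult_le_compat_r (Rabs t) _ _ (Rlt_le _ _ Ha) Hn. lra.
Qed.

Lemma cv_of_bound (a : nat -> Z) (r K : R) :
  (forall n, Rabs (IZR (a n) - INR n * r) <= K) ->
  Un_cv (fun n => IZR (a n) / INR n) r.
Proof.
  move=> H eps Heps.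
  have HK : 0 <= K by have := H O; have := Rabs_pos (IZR (a O) - INR 0 * r); lra.
  have [N [HN1 HN]] := nat_big1 (K / eps + 1).
  exists N => n Hn. rewrite /Rdist.
  have Hn1 : (1 <= INR n) by apply: (le_INR 1); lia.
  have HNn : INR N <= INR n by apply: le_INR; lia.
  have -> : IZR (a n) / INR n - r = (IZR (a n) - INR n * r) * / INR n by field; lra.
  rewrite Rabs_mult Rabs_inv (Rabs_right (INR n)); last lra.
  have Hb := H n.
  apply: (Rle_lt_trans _ (K * / INR n)).
  - apply: Rmult_le_compat_r => //. left; apply: Rinv_0_lt_compat; lra.
  - apply: (Rmult_lt_reg_r (INR n)); first lra.
    rewrite Rmult_assoc Rinv_l; last lra.
    have E : K / eps * eps = K by field; lra.
    have := Rmult_le_compat_r eps _ _ (Rlt_le _ _ Heps) (Rle_trans _ _ _ HN HNn).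
    rewrite Rmult_plus_distr_r E. lra.
Qed.

Lemma limit_bound (u : nat -> R) (l c e K : R) :
  Un_cv u l -> (forall m, (1 <= m)%nat -> Rabs (u m - c) <= e + K / INR m) ->
  Rabs (l - c) <= e.
Proof.
  move=> Hu Hb. apply: Rnot_lt_le => Hlt.
  set d := Rabs (l - c) - e.
  have Hd : 0 < d / 2 by rewrite /d; lra.
  have [N1 HN1] := Hu _ Hd.
  have [m [Hm1 Hm2]] := nat_big1 (INR N1 + Rabs K * 2 / d + 1).
  have HmN : (m >= N1)%nat.
  { apply: INR_le. have : 0 <= Rabs K * 2 / d.
    { apply: Rmult_le_pos; last (left; apply: Rinv_0_lt_compat; lra).
      have := Rabs_pos K; lra. }
    lra. }
  have H1 := HN1 m HmN. rewrite /Rdist in H1.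
  have H2 := Hb m Hm1.
  have Hm0 : 0 < INR m by apply: lt_0_INR; lia.
  have H3 : K / INR m < d / 2.
  { apply: (Rle_lt_trans _ (Rabs K / INR m)).
    - rewrite /Rdiv; apply: Rmult_le_compat_r; first (left; apply: Rinv_0_lt_compat; lra).
      apply: Rle_abs.
    - apply: (Rmult_lt_reg_r (INR m)) => //.
      have -> : Rabs K / INR m * INR m = Rabs K by field; lra.
      have Hdd : 0 < d by lra.
      have E : Rabs K * 2 / d * d = Rabs K * 2 by field; lra.
      have : 0 <= INR N1 by apply: pos_INR.
      move=> HN0.
      have Hx : Rabs K * 2 / d + 1 <= INR m by lra.
      have := Rmult_le_compat_r d _ _ (Rlt_le _ _ Hdd) Hx.
      rewrite Rmult_plus_distr_r E. lra. }
  have := Rabs_triang (l - u m) (u m - c).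
  have -> : l - u m + (u m - c) = l - c by ring.
  rewrite Rabs_minus_sym in H1.
  rewrite /d in Hd H3 H1. lra.
Qed.

End Reals1.

Section Homog.
Variable G : groupType.
Local Open Scope R_scope.

Lemma homogenize (psi : G -> R) (K : R) :
  (forall (x : G) n, Rabs (psi (x ^+ n)%g - INR n * psi x) <= INR n * K) ->
  exists gam : G -> R, forall (x : G) n, Rabs (INR n * gam x - psi (x ^+ n)%g) <= K.
Proof.
  move=> H.
  have HK : 0 <= K.
  { have := H 1%g 1%nat. rewrite expg1 /= !Rmult_1_l.
    have := Rabs_pos (psi 1%g - psi 1%g); lra. }
  pose s x n := psi (x ^+ n)%g / INR n.
  have Hs : forall x n m, (1 <= n)%nat -> (1 <= m)%nat ->
      Rabs (s x (n * m)%nat - s x n) <= K / INR n.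
  { move=> x n m Hn Hm. rewrite /s.
    have Hn0 : 0 < INR n by apply: lt_0_INR; lia.
    have Hm0 : 0 < INR m by apply: lt_0_INR; lia.
    have := H (x ^+ n)%g m. rewrite -expgnA mult_INR.
    move=> Hb.
    have -> : psi (x ^+ (n * m))%g / (INR n * INR m) - psi (x ^+ n)%g / INR n
       = (psi (x ^+ (n * m))%g - INR m * psi (x ^+ n)%g) * / (INR n * INR m)
      by field; lra.
    rewrite Rabs_mult Rabs_inv (Rabs_right (INR n * INR m)); last nra.
    apply: (Rle_trans _ (INR m * K * / (INR n * INR m))).
    - apply: Rmult_le_compat_r => //. left; apply: Rinv_0_lt_compat; nra.
    - right; field; lra. }
  have Hs2 : forall x n m, (1 <= n)%nat -> (1 <= m)%nat ->
      Rabs (s x m - s x n) <= K / INR n + K / INR m.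
  { move=> x n m Hn Hm.
    have h1 := Hs x n m Hn Hm. have h2 := Hs x m n Hm Hn.
    rewrite Nat.mul_comm in h1.
    have := Rabs_triang (s x m - s x (m * n)%nat) (s x (m * n)%nat - s x n).
    have -> : s x m - s x (m * n)%nat + (s x (m * n)%nat - s x n) = s x m - s x n by ring.
    rewrite Rabs_minus_sym in h2. lra. }
  have Hc : forall x, Cauchy_crit (s x).
  { move=> x eps Heps.
    have [N [HN1 HN]] := nat_big1 (2 * K / eps + 1).
    exists N => n m Hn Hm. rewrite /Rdist.
    have HnN : INR N <= INR n by apply: le_INR; lia.
    have HmN : INR N <= INR m by apply: le_INR; lia.
    have HN0 : 0 < INR N by apply: lt_0_INR; lia.
    have := Hs2 x m n ltac:(lia) ltac:(lia).
    have E1 : K / INR n <= K / INR N.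
    { rewrite /Rdiv; apply: Rmult_le_compat_l => //. apply: Rinv_le_contravar => //. }
    have E2 : K / INR m <= K / INR N.
    { rewrite /Rdiv; apply: Rmult_le_compat_l => //. apply: Rinv_le_contravar => //. }
    have E3 : 2 * (K / INR N) < eps.
    { apply: (Rmult_lt_reg_r (INR N)) => //.
      have -> : 2 * (K / INR N) * INR N = 2 * K by field; lra.
      have E : 2 * K / eps * eps = 2 * K by field; lra.
      have := Rmult_le_compat_r eps _ _ (Rlt_le _ _ Heps) HN.
      rewrite Rmult_plus_distr_r E. lra. }
    lra. }
  exists (fun x => proj1_sig (R_complete _ (Hc x))).
  move=> x n. case: (R_complete _ (Hc x)) => l Hl /=.
  case: n => [|n].
  - have := H x O. rewrite /= => h. rewrite !Rmult_0_l Rminus_0_r in h.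
    rewrite Rmult_0_l Rminus_0_l Rabs_Ropp. lra.
  - have Hn0 : 0 < INR (S n) by apply: lt_0_INR; lia.
    have := limit_bound (s x) l (s x (S n)) (K / INR (S n)) K Hl
      (fun m Hm => Hs2 x (S n) m ltac:(lia) Hm).
    have -> : INR (S n) * l - psi (x ^+ (S n))%g = INR (S n) * (l - s x (S n)).
    { rewrite /s. field. lra. }
    rewrite Rabs_mult (Rabs_right (INR (S n))); last lra.
    move=> h.
    apply: (Rle_trans _ (INR (S n) * (K / INR (S n)))).
    + apply: Rmult_le_compat_l => //; lra.
    + right; field; lra.
Qed.
End Homog.

Lemma abs_bounds (u c : R) : (Rabs u <= c)%R -> (- c <= u <= c)%R.
Proof.
  move=> H. have := Rle_abs u. have := Rle_abs (- u). rewrite Rabs_Ropp. lra.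
Qed.

Section Abstract.
Variable G : groupType.
Variable le : G -> G -> Prop.
Hypothesis Hrefl : forall x, le x x.
Hypothesis Hanti : forall x y, le x y -> le y x -> x = y.
Hypothesis Htrans : forall x y z, le x y -> le y z -> le x z.
Hypothesis Hr : forall x y k, le x y -> le (x * k)%g (y * k)%g.
Hypothesis Hl : forall x y k, le x y -> le (k * x)%g (k * y)%g.
Variable g : G.
Hypothesis Hdom : dominant le g.
Local Open Scope group_scope.

Lemma A_pos n : le 1 (g ^+ n).
Proof.
  case: Hdom => Hg1 _. elim: n => [|n IH]; first exact: Hrefl.
  rewrite expgSr. apply: (Htrans _ _ _ IH). have := Hl 1 g (g ^+ n) Hg1.
  by rewrite mulg1.
Qed.

Lemma A_mono p q : (p <= q)%Z -> le (zpowg g p) (zpowg g q).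
Proof.
  move=> Hpq. have -> : q = (p + Z.of_nat (Z.to_nat (q - p)))%Z by lia.
  rewrite zpow_add zpow_nat. have := Hl _ _ (zpowg g p) (A_pos (Z.to_nat (q - p))).
  by rewrite mulg1.
Qed.

Lemma A_strict p q : (p < q)%Z -> ~ le (zpowg g q) (zpowg g p).
Proof.
  move=> Hpq H. case: Hdom => Hg1 [Hne _]. apply: Hne.
  have E : q = (p + Z.of_nat (S (Z.to_nat (q - p - 1))))%Z by lia.
  rewrite E zpow_add zpow_nat in H.
  have := Hl _ _ (zpowg g p)^-1 H. rewrite mulgA mulVg mul1g => H2.
  apply: Hanti => //. apply: (Htrans _ _ _ _ H2).
  rewrite expgS. have := Hl _ _ g (A_pos (Z.to_nat (q - p - 1))). by rewrite mulg1.
Qed.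

Lemma A_up x p q : le x (zpowg g p) -> (p <= q)%Z -> le x (zpowg g q).
Proof. move=> H1 H2. exact: (Htrans _ _ _ H1 (A_mono _ _ H2)). Qed.

Lemma A_lower_of x s : le (zpowg g s) x -> le x^-1 (zpowg g (- s)).
Proof.
  move=> H. have := Hl _ _ (zpowg g s)^-1 H. rewrite mulVg => H1.
  have := Hr _ _ x^-1 H1. rewrite mul1g -mulgA mulgV mulg1 zpow_opp //.
Qed.

Lemma A_psi_ex : exists psi : G -> Z, forall x,
  le x (zpowg g (psi x)) /\ forall q, le x (zpowg g q) -> (psi x <= q)%Z.
Proof.
  have Hex : forall x, exists p, le x (zpowg g p) /\ forall q, le x (zpowg g q) -> (p <= q)%Z.
  { move=> x. case: Hdom => _ [_ Hd].
    have [n Hn] := Hd x. have [m Hm] := Hd x^-1.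
    apply: (zmin (fun p => le x (zpowg g p)) (Z.of_nat n) (- Z.of_nat m)).
    - by rewrite zpow_nat.
    - move=> p Hp. destruct (Z_lt_le_dec p (- Z.of_nat m)) as [h|h] => //.
      exfalso. apply: (A_strict _ _ h).
      have := Hl _ _ (g ^+ m)^-1 Hm. rewrite mulVg => H1.
      have := Hr _ _ x H1. rewrite mul1g -mulgA mulVg mulg1 => H2.
      rewrite zpow_negnat. exact: (Htrans _ _ _ H2 Hp). }
  exists (fun x => proj1_sig (constructive_indefinite_description _ (Hex x))).
  move=> x. by case: (constructive_indefinite_description _ (Hex x)).
Qed.

Lemma A_main :
  (exists m : Z, forall y q, le y (zpowg g q) \/ le (zpowg g (q - m)) y) ->
  exists gamma : G -> R,
    (forall h : G, growth le g h (gamma h)) /\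
    nonzero_fun gamma /\ homogeneous gamma /\ quasimorphism gamma.
Proof.
  move=> [m Hm]. have [psi Hpsi] := A_psi_ex.
  have P1 : forall x y, (psi (x * y)%g <= psi x + psi y)%Z.
  { move=> x y. apply: (proj2 (Hpsi (x * y))).
    rewrite zpow_add. apply: (Htrans _ _ _ (Hr _ _ y (proj1 (Hpsi x)))).
    exact: Hl (proj1 (Hpsi y)). }
  have P2 : forall x y, (psi x + psi y <= psi (x * y)%g + m + 1)%Z.
  { move=> x y. case: (Hm y (psi y - 1)%Z) => Hy.
    - have := proj2 (Hpsi y) _ Hy. lia.
    - have H1 := A_lower_of _ _ Hy.
      have H2 := Hr _ _ y^-1 (proj1 (Hpsi (x * y))). rewrite mulgK in H2.
      have H3 := Hl _ _ (zpowg g (psi (x * y))) H1.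
      rewrite -zpow_add in H3.
      have := proj2 (Hpsi x) _ (Htrans _ _ _ H2 H3). lia. }
  have P3 : forall n, psi (g ^+ n) = Z.of_nat n.
  { move=> n. have Ha := proj2 (Hpsi (g ^+ n)) (Z.of_nat n).
    rewrite zpow_nat in Ha. have Hb := Ha (Hrefl _).
    destruct (Z_lt_le_dec (psi (g ^+ n)) (Z.of_nat n)) as [h|h]; last lia.
    exfalso. apply: (A_strict _ _ h). rewrite zpow_nat. exact: (proj1 (Hpsi _)). }
  set Kz := (Z.abs m + 1)%Z. have HKz : (0 <= Kz)%Z by rewrite /Kz; lia.
  have Q : forall x y, (Z.abs (psi (x * y)%g - psi x - psi y) <= Kz)%Z.
  { move=> x y. have := P1 x y. have := P2 x y. rewrite /Kz. lia. }
  clearbody Kz.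
  have Q2 : forall x n, (Z.abs (psi (x ^+ n)%g - Z.of_nat n * psi x) <= Z.of_nat n * Kz)%Z.
  { move=> x. elim=> [|n IH].
    - rewrite expg0. have := P3 O. rewrite expg0 => ->. simpl. lia.
    - have HQ : (Z.abs (psi (x ^+ (S n))%g - psi (x ^+ n)%g - psi x) <= Kz)%Z.
      { rewrite expgSr. apply: Q. }
      move: HQ. rewrite Nat2Z.inj_succ !Z.mul_succ_l. lia. }
  have [gam Hgam] := @homogenize G (fun x => IZR (psi x)) (IZR Kz) (fun x n =>
     ltac:(rewrite INR_IZR_INZ -mult_IZR -minus_IZR -abs_IZR -mult_IZR;
           apply: IZR_le; apply: Q2)).
  have HK : (0 <= IZR Kz)%R by apply: IZR_le.
  exists gam. split; [|split; [|split]].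
  - move=> h. exists (fun n => psi (h ^+ n)). split.
    + move=> n. exact: Hpsi.
    + apply: (cv_of_bound _ _ (IZR Kz)) => n. rewrite Rabs_minus_sym. exact: Hgam.
  - exists g. have Hg1 : gam g = 1%R.
    { apply: Rminus_diag_uniq. apply: (zero_of_bounded _ (IZR Kz)) => n.
      have := Hgam g n. rewrite P3 -INR_IZR_INZ.
      have -> : (INR n * gam g - INR n = INR n * (gam g - 1))%R by ring.
      rewrite Rabs_mult Rabs_right //. apply: Rle_ge; apply: pos_INR. }
    rewrite Hg1. lra.
  - move=> x k. apply: Rminus_diag_uniq. apply: (zero_of_bounded _ (2 * IZR Kz)) => n.
    have h1 := Hgam (x ^+ k) n.
    have h2 : (Rabs (INR k * INR n * gam x - IZR (psi (x ^+ k ^+ n)%g)) <= IZR Kz)%R.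
    { rewrite -mult_INR -expgnA. apply: Hgam. }
    apply abs_bounds in h1. apply abs_bounds in h2.
    have E : (INR n * (gam (x ^+ k) - INR k * gam x)
            = (INR n * gam (x ^+ k) - IZR (psi (x ^+ k ^+ n)%g))
              - (INR k * INR n * gam x - IZR (psi (x ^+ k ^+ n)%g)))%R by ring.
    have Hn := pos_INR n.
    rewrite -(Rabs_right (INR n)); last lra. rewrite -Rabs_mult E.
    apply: Rabs_le. lra.
  - exists (3 * IZR Kz + IZR Kz)%R => x y.
    have e : forall z, (Rabs (gam z - IZR (psi z)) <= IZR Kz)%R.
    { move=> z. have := Hgam z 1%nat. by rewrite /= Rmult_1_l expg1. }
    have q : (Rabs (IZR (psi (x * y)%g) - IZR (psi x) - IZR (psi y)) <= IZR Kz)%R.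
    { rewrite -!minus_IZR -abs_IZR. apply: IZR_le. apply: Q. }
    have e1 := abs_bounds _ _ (e (x * y)). have e2 := abs_bounds _ _ (e x).
    have e3 := abs_bounds _ _ (e y). apply abs_bounds in q.
    apply: Rabs_le. lra.
Qed.
End Abstract.

Lemma height_fun (X : Type) (H : Z -> X -> Prop) :
  half_space_filtration H ->
  exists hgt : X -> Z, (forall a, height H a (hgt a)) /\
     (forall a n, height H a n -> n = hgt a).
Proof.
  move=> [Hdec [Hcap Hcup]].
  have Hdown : forall a n k, H n a -> (k <= n)%Z -> H k a.
  { move=> a n k Hn Hk.
    have E : n = (k + Z.of_nat (Z.to_nat (n - k)))%Z by lia.
    rewrite E in Hn. move: Hn. clear E Hk. elim: (Z.to_nat (n - k)) => [|j IH].
    - by rewrite Z.add_0_r.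
    - move=> Hj. apply: IH. rewrite Nat2Z.inj_succ Z.add_succ_r in Hj.
      have := proj1 (Hdec (k + Z.of_nat j)%Z) a. rewrite Z.add_1_r. by apply. }
  have Hex : forall a, exists n, height H a n.
  { move=> a. have [n0 Hn0] := Hcup a.
    have [m Hm] : exists m, ~ H m a.
    { apply: NNPP => Hn. apply: (Hcap a) => n. apply: NNPP => Hn'. apply: Hn. by exists n. }
    apply: (zmax (fun n => H n a) n0 (m - 1)) => // p Hp.
    destruct (Z_lt_le_dec p m) as [h|h]; first lia.
    exfalso; apply: Hm; exact: (Hdown a p m Hp h). }
  exists (fun a => proj1_sig (constructive_indefinite_description _ (Hex a))).
  split.
  - move=> a. by case: (constructive_indefinite_description _ (Hex a)).
  - move=> a n Hn. case: (constructive_indefinite_description _ (Hex a)) => k Hk /=.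
    case: Hn => Hn1 Hn2. case: Hk => Hk1 Hk2. have := Hn2 _ Hk1. have := Hk2 _ Hn1. lia.
Qed.

Section Coarse.
Variable G : groupType.
Variable le : G -> G -> Prop.
Hypothesis Htrans : forall x y z, le x y -> le y z -> le x z.
Variable phi : G -> R.
Variables B dq : R.
Hypothesis HB : (0 <= B)%R.
Hypothesis Hdq : (0 <= dq)%R.
Hypothesis C1 : forall x y, le x y -> (phi x <= phi y + B)%R.
Hypothesis C2 : forall x y, (phi y - phi x >= B)%R -> le x y.
Hypothesis Cq : forall x y, (Rabs (phi (x * y)%g - phi x - phi y) <= dq)%R.
Hypothesis C0 : phi 1%g = 0%R.
Hypothesis Cu : forall M : R, exists u, (phi u >= M)%R.

Lemma C_pow (u : G) : (phi u - dq >= 1)%R -> forall n, (phi (u ^+ n)%g >= INR n)%R.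
Proof.
  move=> Hu. elim=> [|n IH].
  - rewrite expg0 C0 /=. lra.
  - have h : (Rabs (phi (u ^+ (S n))%g - phi (u ^+ n)%g - phi u) <= dq)%R.
    { rewrite expgSr. apply: Cq. }
    apply abs_bounds in h. rewrite S_INR. lra.
Qed.

Lemma C_adm : admissible le.
Proof.
  have [u Hu] := Cu (B + dq + 1)%R.
  exists u. split; [|split].
  - apply: C2. rewrite C0. lra.
  - move=> E. rewrite E C0 in Hu. lra.
  - move=> h. have [n Hn] := nat_big (phi h + B)%R. exists n.
    apply: C2. have := C_pow u ltac:(lra) n. lra.
Qed.

Lemma C_tot (g : G) : dominant le g ->
  exists m : Z, forall y q, le y (zpowg g q) \/ le (zpowg g (q - m)) y.
Proof.
  move=> [Hg1 [Hgne Hd]].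
  have [u Hu] := Cu (3 * B + dq)%R.
  have [m0 Hm0] := Hd u. have Hm1 := C1 _ _ Hm0.
  exists (Z.of_nat m0) => y q.
  destruct (Rle_lt_dec B (phi (zpowg g q) - phi y)) as [h|h].
  - left. apply: C2. lra.
  - right. apply: C2.
    have E : zpowg g q = (zpowg g (q - Z.of_nat m0) * zpowg g (Z.of_nat m0))%g.
    { by rewrite -zpow_add Z.sub_add. }
    have h2 := Cq (zpowg g (q - Z.of_nat m0)) (zpowg g (Z.of_nat m0)).
    rewrite -E zpow_nat in h2. apply abs_bounds in h2. lra.
Qed.
End Coarse.

Definition order_props (G : groupType) (le : G -> G -> Prop) : Prop :=
  (forall x, le x x) /\
  (forall x y, le x y -> le y x -> x = y) /\
  (forall x y z, le x y -> le y z -> le x z) /\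
  (forall x y k, le x y -> le (x * k)%g (y * k)%g) /\
  (forall x y k, le x y -> le (k * x)%g (k * y)%g).

Arguments order_props {G}.

Lemma ind_props (G : groupType) (X : Type) (leX : X -> X -> Prop) (act : G -> X -> X) :
  poset leX -> group_action act -> effective_action act ->
  order_props (induced_order leX act).
Proof.
  move=> [Pr [Pa Pt]] [A1 AM] Heff. rewrite /induced_order.
  split; [|split; [|split; [|split]]].
  - move=> x k z. exact: Pr.
  - move=> x y H1 H2.
    have E : forall z, act x z = act y z.
    { move=> z. apply: Pa; [have := H1 1%g z | have := H2 1%g z]; by rewrite !mul1g. }
    have : (y^-1 * x)%g = 1%g.
    { apply: Heff => z. by rewrite AM E -AM mulVg A1. }
    move=> h. by rewrite -(mulVKg y x) h mulg1.
  - move=> x y z H1 H2 k w. exact: Pt (H1 k w) (H2 k w).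
  - move=> x y k H kk z. rewrite !mulgA (AM (kk * x)%g) (AM (kk * y)%g). exact: H.
  - move=> x y k H k' z. rewrite !mulgA. exact: H.
Qed.

Lemma B_main (G : groupType) (le : G -> G -> Prop) : quasi_total_order le ->
  order_props le /\
  exists (phi : G -> R) (B dq : R), (0 <= B)%R /\ (0 <= dq)%R /\
   (forall x y, le x y -> (phi x <= phi y + B)%R) /\
   (forall x y, (phi y - phi x >= B)%R -> le x y) /\
   (forall x y, (Rabs (phi (x * y)%g - phi x - phi y) <= dq)%R) /\
   phi 1%g = 0%R /\
   (forall M : R, exists u, (phi u >= M)%R).
Proof.
  move=> [X [leX [H [act [[Hpos [Hfil [w Hw]]] [Hact [Heff [[d Hd] [Hunb Hiff]]]]]]]]].
  have Hind := @ind_props G X leX act Hpos Hact Heff.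
  have Hle : le = induced_order leX act.
  { apply: functional_extensionality => x. apply: functional_extensionality => y.
    apply: propositional_extensionality. exact: Hiff. }
  subst le. split; first exact: Hind.
  have [hgt [Hh Hhu]] := @height_fun X H Hfil.
  case: Hunb => g0 [a0 [Hup _]].
  case: Hpos => Pr [Pa Pt].
  case: Hact => [A1 AM].
  pose phi x := IZR (hgt (act x a0) - hgt a0).
  have F1 : forall a b, leX b a -> (IZR (hgt b - hgt a) <= Rabs w)%R.
  { move=> a b Hba. destruct (Rle_lt_dec (IZR (hgt b - hgt a)) (Rabs w)) as [h|h] => //.
    exfalso. have Hab : leX a b.
    { apply: (Hw b a _ _ (Hh b) (Hh a)). have := Rle_abs w. lra. }
    have E := Pa _ _ Hab Hba. subst b. rewrite Z.sub_diag in h.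
    have := Rabs_pos w. lra. }
  have F2 : forall a b, (IZR (hgt a - hgt b) >= w)%R -> leX b a.
  { move=> a b h. exact: (Hw a b _ _ (Hh a) (Hh b) h). }
  have F3 : forall x a b, (Rabs (IZR ((hgt (act x a) - hgt (act x b)) - (hgt a - hgt b))) <= Rabs d)%R.
  { move=> x a b. apply: (Rle_trans _ d); last exact: Rle_abs.
    exact: Hd (Hh _) (Hh _) (Hh _) (Hh _). }
  have F4 : forall x z, (Rabs (IZR (hgt (act x z) - hgt z) - phi x) <= Rabs d)%R.
  { move=> x z. have := F3 x z a0. rewrite /phi !minus_IZR.
    have -> : (IZR (hgt (act x z)) - IZR (hgt (act x a0)) - (IZR (hgt z) - IZR (hgt a0))
      = IZR (hgt (act x z)) - IZR (hgt z) - (IZR (hgt (act x a0)) - IZR (hgt a0)))%R by ring.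
    done. }
  exists phi, (Rabs w + 3 * Rabs d)%R, (Rabs d).
  have Hw0 := Rabs_pos w. have Hd0 := Rabs_pos d.
  split; [lra|split; [lra|split; [|split; [|split; [|split]]]]].
  - move=> x y Hxy. have := Hxy 1%g a0. rewrite !mul1g => h.
    have := F1 _ _ h. rewrite /phi !minus_IZR. lra.
  - move=> x y Hxy k z. apply: F2. rewrite !AM.
    have h1 := F3 k (act y z) (act x z).
    have h2 := F4 y z. have h3 := F4 x z.
    apply abs_bounds in h1. apply abs_bounds in h2. apply abs_bounds in h3.
    rewrite !minus_IZR in h1 h2 h3 |- *. have := Rle_abs w. lra.
  - move=> x y. have h := F4 x (act y a0). rewrite /phi AM.
    rewrite /phi !minus_IZR in h |- *.
    have -> : (IZR (hgt (act x (act y a0))) - IZR (hgt a0) -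
      (IZR (hgt (act x a0)) - IZR (hgt a0)) - (IZR (hgt (act y a0)) - IZR (hgt a0))
      = IZR (hgt (act x (act y a0))) - IZR (hgt (act y a0)) -
          (IZR (hgt (act x a0)) - IZR (hgt a0)))%R by ring.
    exact: h.
  - by rewrite /phi A1 Z.sub_diag.
  - move=> M. have [N HN] := Hup (up M + hgt a0)%Z.
    exists (zpowg g0 N). have := HN N _ (Z.le_ge _ _ (Z.le_refl N)) (Hh _).
    move=> h. have [h1 _] := archimed M.
    have h2 : (IZR (up M) <= IZR (hgt (act (zpowg g0 N) a0) - hgt a0))%R.
    { apply: IZR_le. lia. }
    rewrite /phi. lra.
Qed.

Definition fl (r : R) : Z := (up r - 1)%Z.

Lemma fl_spec (r : R) : (IZR (fl r) <= r < IZR (fl r) + 1)%R.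
Proof. rewrite /fl minus_IZR. have [h1 h2] := archimed r. lra. Qed.

Lemma fl_lt (a b : R) : (a + 1 <= b)%R -> (fl a < fl b)%Z.
Proof. move=> h. apply: lt_IZR. have := fl_spec a. have := fl_spec b. lra. Qed.

Lemma fl_lt_inv (a b : R) : (fl a < fl b)%Z -> (a < b)%R.
Proof.
  move=> h. have h2 : (IZR (fl a) + 1 <= IZR (fl b))%R.
  { rewrite -plus_IZR. apply: IZR_le. lia. }
  have := fl_spec a. have := fl_spec b. lra.
Qed.

Definition hgt2 (G : groupType) (f : G -> R) (a : G * Z) : Z := (fl (f a.1) + a.2)%Z.
Arguments hgt2 {G}.
Definition act2 (G : groupType) (g : G) (a : G * Z) : G * Z := ((g * a.1)%g, a.2).
Arguments act2 {G}.
Definition H2 (G : groupType) (f : G -> R) (n : Z) (a : G * Z) : Prop := (n <= hgt2 f a)%Z.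
Arguments H2 {G}.
Definition leX2 (G : groupType) (f : G -> R) (b a : G * Z) : Prop :=
  b = a \/ (hgt2 f b < hgt2 f a)%Z.
Arguments leX2 {G}.

Section Part2.
Variable G : groupType.
Variable f : G -> R.
Hypothesis Hnz : nonzero_fun f.
Hypothesis Hhom : homogeneous f.
Variable D : R.
Hypothesis HD : forall h k : G, (Rabs (f (h * k)%g - f h - f k) <= D)%R.
Local Open Scope R_scope.

Lemma P_D0 : 0 <= D.
Proof. exact: (Rle_trans _ _ _ (Rabs_pos _) (HD 1%g 1%g)). Qed.

Lemma P_f1 : f 1%g = 0.
Proof. have := Hhom 1%g O. rewrite expg0 /=. lra. Qed.

Lemma P_finv x : f x^-1%g = - f x.
Proof.
  suff : f x + f x^-1%g = 0 by lra.
  apply: (zero_of_bounded _ D) => n.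
  have h := HD (x ^+ n)%g (x^-1 ^+ n)%g.
  have E : (x ^+ n * x^-1 ^+ n)%g = 1%g by rewrite expVgn mulgV.
  rewrite E P_f1 !Hhom in h.
  have -> : INR n * Rabs (f x + f x^-1%g) = Rabs (0 - INR n * f x - INR n * f x^-1%g).
  { have -> : 0 - INR n * f x - INR n * f x^-1%g = - (INR n * (f x + f x^-1%g)) by ring.
    rewrite Rabs_Ropp Rabs_mult (Rabs_right (INR n)) //. apply: Rle_ge; apply: pos_INR. }
  exact: h.
Qed.

Lemma P_fz x p : f (zpowg x p) = IZR p * f x.
Proof.
  have [n [->|->]] := Z_nat_or_neg p.
  - by rewrite zpow_nat Hhom INR_IZR_INZ.
  - by rewrite zpow_negnat P_finv Hhom opp_IZR -INR_IZR_INZ; ring.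
Qed.

Lemma P_pos : exists u, 0 < f u.
Proof.
  case: Hnz => h0 Hh0. destruct (Rlt_le_dec 0 (f h0)) as [h|h].
  - by exists h0.
  - exists h0^-1%g. rewrite P_finv. lra.
Qed.

Lemma P_height a n : height (@H2 G f) a n <-> n = hgt2 f a.
Proof.
  rewrite /height /H2. split.
  - move=> [h1 h2]. have := h2 _ (Z.le_refl _). lia.
  - move=> ->. split; [lia | done].
Qed.

Lemma P_poset : poset (leX2 f).
Proof.
  rewrite /leX2. split; [|split].
  - by left.
  - move=> a b [->|h1] // [->|h2] //. lia.
  - move=> a b c [->|h1] [<-|h2]; auto. right; lia.
Qed.

Lemma P_hso : half_space_order (leX2 f) (@H2 G f).
Proof.
  split; first exact: P_poset.
  split.
  - rewrite /H2. split; [|split].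
    + move=> n. split; first (move=> a; lia).
      exists (1%g, (n - fl (f 1%g))%Z). rewrite /hgt2 /=. lia.
    + move=> a h. have := h (hgt2 f a + 1)%Z. lia.
    + move=> a. exists (hgt2 f a); lia.
  - exists 1 => a b ha hb /P_height -> /P_height -> h.
    right. apply: lt_IZR. rewrite minus_IZR in h. lra.
Qed.

Lemma P_act : group_action (@act2 G).
Proof.
  rewrite /act2. split.
  - move=> [x m] /=. by rewrite mul1g.
  - move=> g h [x m] /=. by rewrite mulgA.
Qed.

Lemma P_eff : effective_action (@act2 G).
Proof.
  move=> g h. have := h (1%g, 0%Z). rewrite /act2 /= mulg1. by case.
Qed.

Lemma P_qa : quasi_automorphism_action (@H2 G f) (@act2 G).
Proof.
  exists (2 * D + 2) => g [x m] [y m'] hga hgb ha hb.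
  move=> /P_height -> /P_height -> /P_height -> /P_height ->.
  rewrite /hgt2 /act2 /=.
  have e1 := abs_bounds _ _ (HD g x). have e2 := abs_bounds _ _ (HD g y).
  have f1 := fl_spec (f (g * x)%g). have f2 := fl_spec (f (g * y)%g).
  have f3 := fl_spec (f x). have f4 := fl_spec (f y).
  move: f1 f2 f3 f4. move: (fl (f (g * x))%g) (fl (f (g * y))%g) (fl (f x)) (fl (f y)) => A B C E f1 f2 f3 f4.
  apply: Rabs_le. rewrite !minus_IZR !plus_IZR. lra.
Qed.

Lemma P_unb : unbounded_action (@H2 G f) (@act2 G).
Proof.
  have [u Hu] := P_pos. exists u, (1%g, 0%Z).
  have E : forall n hn, height (@H2 G f) (act2 (zpowg u n) (1%g, 0%Z)) hn ->
     hn = fl (IZR n * f u).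
  { move=> n hn /P_height ->. by rewrite /hgt2 /act2 /= mulg1 P_fz Z.add_0_r. }
  split.
  - move=> M. exists (up ((IZR M + 1) / f u)) => n hn Hn /E ->.
    have [a1 _] := archimed ((IZR M + 1) / f u).
    have Hn' : IZR (up ((IZR M + 1) / f u)) <= IZR n by apply: IZR_le; lia.
    have : (IZR M + 1) / f u * f u = IZR M + 1 by field; lra.
    have := fl_spec (IZR n * f u). move=> hf hE.
    have : IZR M + 1 <= IZR n * f u.
    { rewrite -hE. apply: Rmult_le_compat_r; lra. }
    move=> hh. apply: Z.le_ge. apply: le_IZR. lra.
  - move=> M. exists (- up (- IZR M / f u))%Z => n hn Hn /E ->.
    have [a1 _] := archimed (- IZR M / f u).
    have Hn' : IZR n <= - IZR (up (- IZR M / f u)).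
    { rewrite -opp_IZR. apply: IZR_le; lia. }
    have : - IZR M / f u * f u = - IZR M by field; lra.
    have := fl_spec (IZR n * f u). move=> hf hE.
    have : IZR n * f u <= IZR M.
    { have : IZR n * f u <= (- (- IZR M / f u)) * f u.
      { apply: Rmult_le_compat_r; lra. }
      lra. }
    move=> hh. apply: le_IZR. lra.
Qed.

Definition le2 := induced_order (leX2 f) (@act2 G).

Lemma P_qto : quasi_total_order le2.
Proof.
  exists (G * Z)%type, (leX2 f), (@H2 G f), (@act2 G).
  split; first exact: P_hso. split; first exact: P_act.
  split; first exact: P_eff. split; first exact: P_qa.
  split; first exact: P_unb. done.
Qed.

Lemma P_K1 x y : le2 x y -> f x <= f y.
Proof.
  move=> h. have := h 1%g (1%g, 0%Z). rewrite /leX2 /act2 /hgt2 /= !mul1g !mulg1.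
  case=> [[->]|h2]; first lra.
  left. apply: fl_lt_inv. lia.
Qed.

Lemma P_K2 x y : f y - f x >= 4 * D + 1 -> le2 x y.
Proof.
  move=> h k [z m]. rewrite /leX2 /act2 /hgt2 /=. right.
  apply: Zplus_lt_compat_r. apply: fl_lt.
  have e1 := abs_bounds _ _ (HD (k * y)%g z). have e2 := abs_bounds _ _ (HD k y).
  have e3 := abs_bounds _ _ (HD (k * x)%g z). have e4 := abs_bounds _ _ (HD k x).
  lra.
Qed.
End Part2.

Lemma P_main (G : groupType) (f : G -> R) :
  nonzero_fun f -> homogeneous f -> quasimorphism f ->
  exists (le : G -> G -> Prop) (g : G),
    quasi_total_order le /\ dominant le g /\
    exists (c : R) (gamma : G -> R),
      (0 < c)%R /\
      (forall h : G, growth le g h (gamma h)) /\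
      (forall h : G, f h = (c * gamma h)%R).
Proof.
  move=> Hnz Hhom [D HD].
  have HD0 := @P_D0 G f D HD. have Hf1 := @P_f1 G f Hhom.
  have [u Hu] := @P_pos G f Hnz Hhom D HD.
  have [N HN] := nat_big ((4 * D + 2) / f u).
  set g := (u ^+ N)%g.
  have Hfg : (f g >= 4 * D + 2)%R.
  { rewrite /g Hhom.
    have E : ((4 * D + 2) / f u * f u = 4 * D + 2)%R by field; lra.
    have := Rmult_le_compat_r (f u) _ _ (Rlt_le _ _ Hu) HN. lra. }
  have Hdom : dominant (@le2 G f) g.
  { split; [|split].
    - apply: (@P_K2 G f D HD). rewrite Hf1. lra.
    - move=> E. rewrite E Hf1 in Hfg. lra.
    - move=> h. have [n Hn] := nat_big ((f h + 4 * D + 1) / f g).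
      exists n. apply: (@P_K2 G f D HD). rewrite Hhom.
      have E : ((f h + 4 * D + 1) / f g * f g = f h + 4 * D + 1)%R by field; lra.
      have := Rmult_le_compat_r (f g) _ _ (ltac:(lra) : (0 <= f g)%R) Hn. lra. }
  have [Or [Oa [Ot [Orr Ol]]]] := @ind_props G (G * Z)%type (leX2 f) act2
    (@P_poset G f) (P_act G) (P_eff G).
  have [psi Hpsi] := @A_psi_ex G (@le2 G f) Or Oa Ot Orr Ol g Hdom.
  have b1 : forall x, (f x <= IZR (psi x) * f g)%R.
  { move=> x. rewrite -(@P_fz G f Hhom D HD). apply: (@P_K1 G f). exact: (proj1 (Hpsi x)). }
  have b2 : forall x, (IZR (psi x) * f g < f x + 4 * D + 1 + f g)%R.
  { move=> x. apply: Rnot_le_lt => h.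
    have : @le2 G f x (zpowg g (psi x - 1)).
    { apply: (@P_K2 G f D HD). rewrite (@P_fz G f Hhom D HD) minus_IZR. lra. }
    move=> /(proj2 (Hpsi x)). lia. }
  exists (@le2 G f), g. split; first exact: @P_qto G f Hnz Hhom D HD.
  split; first exact: Hdom.
  exists (f g), (fun h => f h / f g)%R. split; first lra. split.
  - move=> h. exists (fun n => psi (h ^+ n)%g). split.
    + move=> n. exact: Hpsi.
    + apply: (cv_of_bound _ _ ((4 * D + 1) / f g + 1)) => n.
      have h1 := b1 (h ^+ n)%g. have h2 := b2 (h ^+ n)%g.
      rewrite Hhom in h1 h2.
      set c := f g in h1 h2 Hfg |- *. set F := (INR n * f h)%R in h1 h2.
      set p := IZR (psi (h ^+ n)%g) in h1 h2 |- *.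
      have E1 : ((p - INR n * (f h / c)) * c = p * c - F)%R by rewrite /F; field; lra.
      have E2 : (((4 * D + 1) / c + 1) * c = 4 * D + 1 + c)%R by field; lra.
      apply: Rabs_le. split; nra.
  - move=> h. field. lra.
Qed.

Theorem theorem1p3 (G : groupType) :
  (forall le : G -> G -> Prop,
     quasi_total_order le ->
     admissible le /\
     forall g : G, dominant le g ->
       exists gamma : G -> R,
         (forall h : G, growth le g h (gamma h)) /\
         nonzero_fun gamma /\ homogeneous gamma /\ quasimorphism gamma) /\
  (forall f : G -> R,
     nonzero_fun f -> homogeneous f -> quasimorphism f ->
     exists (le : G -> G -> Prop) (g : G),
       quasi_total_order le /\ dominant le g /\
       exists (c : R) (gamma : G -> R),
         (0 < c)%R /\
         (forall h : G, growth le g h (gamma h)) /\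
         (forall h : G, f h = (c * gamma h)%R)).
Proof.
  split; last exact: P_main.
  move=> le Hq.
  have [[Hr [Ha [Ht [Hrr Hll]]]] [phi [B [dq [HB [Hdq [C1 [C2 [Cq [C0 Cu]]]]]]]]]] := @B_main G le Hq.
  split.
  - exact: (@C_adm G le phi B dq HB Hdq C2 Cq C0 Cu).
  - move=> g Hg. apply: (@A_main G le Hr Ha Ht Hrr Hll g Hg).
    exact: (@C_tot G le phi B dq C1 C2 Cq Cu g Hg).
Qed.
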